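(* Let $(\mathcal{J}_g)_{g\in[G]}$ be a partition of $[p]$ into nonempty sets, $p_g=|\mathcal{J}_g|$, and let $\mathcal{S}=\{M\in\mathbb{R}^{p\times(n-1)}:\|M\|_{\mathrm F}\le1\}$. For $T\in\mathbb{R}^{p\times(n-1)}$ and $\lambda>0$ define $R^*\in\mathbb{R}^{p\times(n-1)}$ by $R^*_{\mathcal{J}_g,t}=T_{\mathcal{J}_g,t}\min\bigl\{\lambda p_g^{1/2}/\|T_{\mathcal{J}_g,t}\|_2,1\bigr\}$ (with $R^*_{\mathcal{J}_g,t}=0$ if $T_{\mathcal{J}_g,t}=0$), and assume $T\ne R^*$. Then \[ \operatorname*{argmax}_{M\in\mathcal{S}}\bigl\{\langle T,M\rangle-\lambda\|M\|_{\mathrm{grp}}\bigr\}=\Bigl\{\frac{T-R^*}{\|T-R^*\|_{\mathrm F}}\Bigr\}. \]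
   Context: $\|M\|_{\mathrm{grp}}=\sum_{g=1}^Gp_g^{1/2}\sum_{t=1}^{n-1}\|M_{\mathcal{J}_g,t}\|_2$, where $M_{\mathcal{J}_g,t}$ is the vector of entries of the $t$th column of $M$ with rows in $\mathcal{J}_g$; $\langle A,B\rangle=\mathrm{tr}(A^\top B)$. *)

(* Defs.v *)
From HB Require Import structures.
From mathcomp Require Import all_boot all_order all_algebra.
Set Implicit Arguments. Unset Strict Implicit. Unset Printing Implicit Defensive.
Import Order.TTheory GRing.Theory Num.Theory.
Local Open Scope ring_scope.

Section GroupNorms.
Variables (R : rcfType) (p G q : nat) (grp : 'I_p -> 'I_G).

Definition gsize (g : 'I_G) : nat := #|[set j : 'I_p | grp j == g]|.

Definition blocknorm (M : 'M[R]_(p, q)) (g : 'I_G) (t : 'I_q) : R :=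
  Num.sqrt (\sum_(j : 'I_p | grp j == g) M j t ^+ 2).

Definition frob (M : 'M[R]_(p, q)) : R :=
  Num.sqrt (\sum_(i : 'I_p) \sum_(t : 'I_q) M i t ^+ 2).

Definition grpnorm (M : 'M[R]_(p, q)) : R :=
  \sum_(g : 'I_G) Num.sqrt (gsize g)%:R * \sum_(t : 'I_q) blocknorm M g t.

Definition inner (A B : 'M[R]_(p, q)) : R := \tr (A^T *m B).

Definition Rstar (T : 'M[R]_(p, q)) (lam : R) : 'M[R]_(p, q) :=
  \matrix_(j, t)
    (if blocknorm T (grp j) t == 0 then 0
     else T j t * Num.min (lam * Num.sqrt (gsize (grp j))%:R / blocknorm T (grp j) t) 1).

Definition objective (T : 'M[R]_(p, q)) (lam : R) (M : 'M[R]_(p, q)) : R :=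
  inner T M - lam * grpnorm M.

Definition is_argmax (T : 'M[R]_(p, q)) (lam : R) (M : 'M[R]_(p, q)) : Prop :=
  frob M <= 1 /\
  forall M' : 'M[R]_(p, q), frob M' <= 1 -> objective T lam M' <= objective T lam M.

End GroupNorms.

(* Main.v *)
Require Import Defs.
From HB Require Import structures.
From mathcomp Require Import all_boot all_order all_algebra.
From mathcomp Require Import ring lra.
Import Order.TTheory GRing.Theory Num.Theory.
Local Open Scope ring_scope.

Section Gen.
Variables (R : rcfType) (I : finType) (P : pred I).

Lemma sum_sq_ge0 (a : I -> R) : 0 <= \sum_(i | P i) a i ^+ 2.
Proof. by apply: sumr_ge0 => i _; rewrite sqr_ge0. Qed.

Lemma sum_sq_eq0 (a : I -> R) : \sum_(i | P i) a i ^+ 2 = 0 -> forall i, P i -> a i = 0.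
Proof.
move=> H i Pi; apply/eqP; rewrite -sqrf_eq0; apply/eqP.
by apply: (psumr_eq0P _ H) => // j _; rewrite sqr_ge0.
Qed.

Lemma CS (a b : I -> R) :
  \sum_(i | P i) a i * b i <=
  Num.sqrt (\sum_(i | P i) a i ^+ 2) * Num.sqrt (\sum_(i | P i) b i ^+ 2).
Proof.
set A := Num.sqrt _; set B := Num.sqrt _.
have A0 : 0 <= A by apply: sqrtr_ge0.
have B0 : 0 <= B by apply: sqrtr_ge0.
have [AB0|ABp] := eqVneq (A * B) 0.
  have -> : \sum_(i | P i) a i * b i = 0.
    move/eqP: AB0; rewrite mulf_eq0 => /orP[] /eqP; rewrite /A /B => /eqP;
    rewrite sqrtr_eq0 => H.
    - have H' : \sum_(i | P i) a i ^+ 2 = 0 by apply/eqP; rewrite eq_le H sum_sq_ge0.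
      by apply: big1 => i Pi; rewrite (@sum_sq_eq0 _ H') // mul0r.
    - have H' : \sum_(i | P i) b i ^+ 2 = 0 by apply/eqP; rewrite eq_le H sum_sq_ge0.
      by apply: big1 => i Pi; rewrite (@sum_sq_eq0 _ H') // mulr0.
  by rewrite AB0.
have ABpos : 0 < A * B by rewrite lt0r ABp mulr_ge0.
have H : 0 <= \sum_(i | P i) (B * a i - A * b i) ^+ 2 by apply: sum_sq_ge0.
have E : \sum_(i | P i) (B * a i - A * b i) ^+ 2 =
   B ^+ 2 * \sum_(i | P i) a i ^+ 2 - 2 * (A * B) * \sum_(i | P i) a i * b i
   + A ^+ 2 * \sum_(i | P i) b i ^+ 2.
  rewrite !mulr_sumr -sumrB -big_split /=; apply: eq_bigr => i _; ring.
rewrite E /A /B !sqr_sqrtr ?sum_sq_ge0 // -/A -/B in H.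
have : 0 <= 2 * (A * B) * (A * B - \sum_(i | P i) a i * b i).
  have -> : 2 * (A * B) * (A * B - \sum_(i | P i) a i * b i) =
     (B ^+ 2 * A ^+ 2 - 2 * (A * B) * \sum_(i | P i) a i * b i + A ^+ 2 * B ^+ 2) by ring.
  by rewrite {1 3}/A {1 3}/B !sqr_sqrtr ?sum_sq_ge0.
rewrite pmulr_rge0 ?subr_ge0 // mulr_gt0 //.
Qed.

Lemma norm_scale (k : R) (a : I -> R) :
  Num.sqrt (\sum_(i | P i) (k * a i) ^+ 2) = `|k| * Num.sqrt (\sum_(i | P i) a i ^+ 2).
Proof.
rewrite (eq_bigr (fun i => k ^+ 2 * a i ^+ 2)); last by move=> i _; rewrite exprMn.
by rewrite -mulr_sumr sqrtrM ?sqr_ge0 // sqrtr_sqr.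
Qed.

End Gen.

Section Main.
Variables (R : rcfType) (p G q : nat) (grp : 'I_p -> 'I_G) (T : 'M[R]_(p, q)) (lam : R).
Hypothesis lam_pos : 0 < lam.

Definition sumsq (A : 'M[R]_(p, q)) := \sum_(u : 'I_p * 'I_q) A u.1 u.2 ^+ 2.

Lemma frobE (A : 'M[R]_(p, q)) : frob A = Num.sqrt (sumsq A).
Proof. by rewrite /frob /sumsq pair_big. Qed.

Lemma innerE (A B : 'M[R]_(p, q)) : inner A B = \sum_(u : 'I_p * 'I_q) A u.1 u.2 * B u.1 u.2.
Proof.
rewrite /inner /mxtrace (eq_bigr (fun t => \sum_i A i t * B i t)); last first.
  by move=> t _; rewrite !mxE; apply: eq_bigr => i _; rewrite mxE.
by rewrite exchange_big pair_big.
Qed.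

Lemma sum_blocks (F : 'I_p -> R) : \sum_i F i = \sum_g \sum_(j | grp j == g) F j.
Proof. by rewrite (partition_big grp predT). Qed.

Lemma pair_blocks (F : 'I_p -> 'I_q -> R) :
  \sum_(u : 'I_p * 'I_q) F u.1 u.2 = \sum_g \sum_t \sum_(j | grp j == g) F j t.
Proof.
rewrite -(pair_big predT predT F) sum_blocks; apply: eq_bigr => g _.
by rewrite exchange_big.
Qed.

Definition w g : R := Num.sqrt (gsize grp g)%:R.
Definition N g t := blocknorm grp T g t.
Definition c g t := Num.min (lam * w g / N g t) 1.
Definition D := T - Rstar grp T lam.

Lemma obj_blocks (M : 'M[R]_(p, q)) : objective grp T lam M =
  \sum_g \sum_t (\sum_(j | grp j == g) T j t * M j t - lam * (w g * blocknorm grp M g t)).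
Proof.
rewrite /objective innerE (pair_blocks (fun i t => T i t * M i t)) /grpnorm mulr_sumr -sumrB; apply: eq_bigr => g _.
by rewrite mulr_sumr mulr_sumr -sumrB.
Qed.

Lemma Rstar_blk g t j : grp j == g ->
  Rstar grp T lam j t = if N g t == 0 then 0 else T j t * c g t.
Proof. by move/eqP <-; rewrite mxE. Qed.

Lemma w_ge0 g : 0 <= w g. Proof. exact: sqrtr_ge0. Qed.

Lemma blockA (M : 'M[R]_(p, q)) g t :
  \sum_(j | grp j == g) Rstar grp T lam j t * M j t <= lam * (w g * blocknorm grp M g t).
Proof.
rewrite (eq_bigr (fun j => (if N g t == 0 then 0 else c g t) * (T j t * M j t))); last first.
  by move=> j Hj; rewrite (@Rstar_blk g t j Hj); case: (N g t == 0); ring.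
have hM : 0 <= blocknorm grp M g t by apply: sqrtr_ge0.
rewrite -mulr_sumr; case: eqP => HN.
  by rewrite mul0r mulr_ge0 ?mulr_ge0 ?w_ge0 // ltW.
have Np : 0 < N g t by rewrite lt0r (introN eqP HN) sqrtr_ge0.
have c0 : 0 <= c g t by rewrite le_min ler01 andbT divr_ge0 ?mulr_ge0 ?w_ge0 ?ltW.
have cN : c g t * N g t <= lam * w g.
  by rewrite -ler_pdivlMr // ge_min lexx.
have CSi := @CS R _ (fun j => grp j == g) (fun j => T j t) (fun j => M j t).
apply: le_trans (ler_wpM2l c0 CSi) _.
rewrite !mulrA; exact: ler_wpM2r.
Qed.

Lemma D_blk g t j : grp j == g ->
  D j t = (if N g t == 0 then 1 else 1 - c g t) * T j t.
Proof.
move=> Hj; rewrite /D !mxE (eqP Hj) /N /c; case: (_ == 0); ring.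
Qed.

Lemma blockB g t :
  \sum_(j | grp j == g) T j t * D j t - lam * (w g * blocknorm grp D g t) =
  \sum_(j | grp j == g) D j t ^+ 2.
Proof.
set e := (if N g t == 0 then 1 else 1 - c g t).
set s := \sum_(j | grp j == g) T j t ^+ 2.
have E1 : \sum_(j | grp j == g) T j t * D j t = e * s.
  rewrite /s mulr_sumr; apply: eq_bigr => j Hj; rewrite (@D_blk g t j Hj) -/e; ring.
have E2 : blocknorm grp D g t = `|e| * N g t.
  rewrite /blocknorm (eq_bigr (fun j => (e * T j t) ^+ 2)); last first.
    by move=> j Hj; rewrite (@D_blk g t j Hj) -/e.
  by rewrite (@norm_scale R _ (fun j => grp j == g)).
have E3 : \sum_(j | grp j == g) D j t ^+ 2 = e ^+ 2 * s.
  rewrite /s mulr_sumr; apply: eq_bigr => j Hj; rewrite (@D_blk g t j Hj) -/e; ring.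
have sN : s = N g t ^+ 2 by rewrite sqr_sqrtr // sum_sq_ge0.
rewrite E1 E2 E3 sN /e; case: eqP => HN.
  rewrite HN; ring.
have Np : 0 < N g t by rewrite lt0r (introN eqP HN) sqrtr_ge0.
have c1 : c g t <= 1 by rewrite ge_min lexx orbT.
rewrite ger0_norm ?subr_ge0 //.
rewrite /c; case: leP => H.
  field; exact: lt0r_neq0.
ring.
Qed.

Lemma D_entry i t : D i t = T i t - Rstar grp T lam i t.
Proof. by rewrite /D !mxE. Qed.

Lemma scaleE (A : 'M[R]_(p, q)) k i t : (k *: A) i t = k * A i t.
Proof. by rewrite mxE. Qed.

Lemma subscaleE (A B : 'M[R]_(p, q)) k i t : (A - k *: B) i t = A i t - k * B i t.
Proof. by rewrite !mxE. Qed.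

Lemma obj_le (M : 'M[R]_(p, q)) : objective grp T lam M <= inner D M.
Proof.
rewrite obj_blocks innerE (pair_blocks (fun i t => D i t * M i t)).
apply: ler_sum => g _; apply: ler_sum => t _.
rewrite [X in _ <= X](eq_bigr (fun j => T j t * M j t - Rstar grp T lam j t * M j t)); last first.
  by move=> j _; rewrite D_entry mulrBl.
rewrite sumrB; apply: lerB => //; exact: blockA.
Qed.

Lemma CSg (M : 'M[R]_(p, q)) : inner D M <= frob D * frob M.
Proof.
rewrite innerE !frobE /sumsq.
exact: (@CS R _ predT (fun u => D u.1 u.2) (fun u => M u.1 u.2)).
Qed.

Lemma sumsq_blocks (A : 'M[R]_(p, q)) :
  sumsq A = \sum_g \sum_t \sum_(j | grp j == g) A j t ^+ 2.
Proof. exact: (pair_blocks (fun i t => A i t ^+ 2)). Qed.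

Lemma obj_scale k : 0 <= k -> objective grp T lam (k *: D) = k * sumsq D.
Proof.
move=> k0.
rewrite obj_blocks sumsq_blocks mulr_sumr; apply: eq_bigr => g _.
rewrite mulr_sumr; apply: eq_bigr => t _.
rewrite -blockB.
have E1 : \sum_(j | grp j == g) T j t * (k *: D) j t = k * \sum_(j | grp j == g) T j t * D j t.
  by rewrite mulr_sumr; apply: eq_bigr => j _; rewrite scaleE; ring.
have E2 : blocknorm grp (k *: D) g t = k * blocknorm grp D g t.
  rewrite /blocknorm (eq_bigr (fun j => (k * D j t) ^+ 2)); last first.
    by move=> j _; rewrite scaleE.
  by rewrite (@norm_scale R _ (fun j => grp j == g)) ger0_norm.
rewrite E1 E2; ring.
Qed.

Lemma frob_scale k (A : 'M[R]_(p, q)) : frob (k *: A) = `|k| * frob A.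
Proof.
rewrite !frobE /sumsq (eq_bigr (fun u => (k * A u.1 u.2) ^+ 2)); last first.
  by move=> u _; rewrite scaleE.
exact: (@norm_scale R _ predT k (fun u => A u.1 u.2)).
Qed.

Lemma sumsq_exp (M A : 'M[R]_(p, q)) k :
  sumsq (M - k *: A) = sumsq M - 2 * (k * inner A M) + k ^+ 2 * sumsq A.
Proof.
rewrite /sumsq innerE !mulr_sumr -sumrB -big_split /=; apply: eq_bigr => u _.
rewrite subscaleE; ring.
Qed.

Lemma main_sec (hT : T != Rstar grp T lam) (M : 'M[R]_(p, q)) :
  is_argmax grp T lam M <-> M = (frob D)^-1 *: D.
Proof.
have D0 : D != 0 by rewrite /D subr_eq0.
set d := frob D.
have s0 : sumsq D != 0.
  apply/eqP => H; move/eqP: D0; apply; apply/matrixP => i t; rewrite [X in _ = X]mxE.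
  exact: (@sum_sq_eq0 R _ predT (fun u => D u.1 u.2) H (i, t) isT).
have dpos : 0 < d by rewrite /d frobE sqrtr_gt0 lt0r s0 sum_sq_ge0.
have dn0 : d != 0 by exact: lt0r_neq0.
have sD : sumsq D = d ^+ 2 by rewrite /d frobE sqr_sqrtr // sum_sq_ge0.
have frobMs : frob (d^-1 *: D) = 1.
  by rewrite frob_scale ger0_norm ?invr_ge0 ?ltW // mulVf.
have objMs : objective grp T lam (d^-1 *: D) = d.
  by rewrite obj_scale ?invr_ge0 ?ltW // sD; field.
have ub M' : frob M' <= 1 -> objective grp T lam M' <= d.
  move=> h; apply: le_trans (obj_le M') _; apply: le_trans (CSg M') _.
  by have := ler_wpM2l (ltW dpos) h; rewrite mulr1.
split.
  case=> hM hmax.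
  have h1 : objective grp T lam (d^-1 *: D) <= objective grp T lam M by apply: hmax; rewrite frobMs.
  rewrite objMs in h1.
  have h2 : d <= inner D M := le_trans h1 (obj_le M).
  have sM : sumsq M <= 1 by move: hM; rewrite frobE -{1}sqrtr1 ler_sqrt.
  have kin : 1 <= d^-1 * inner D M by rewrite mulrC ler_pdivlMr // mul1r.
  have Z : sumsq (M - d^-1 *: D) = 0.
    apply/eqP; rewrite eq_le sum_sq_ge0 andbT sumsq_exp sD exprVn mulVf ?expf_neq0 //.
    move: kin sM; set x := d^-1 * inner D M; move=> kin sM; lra.
  apply/matrixP => i t.
  have := @sum_sq_eq0 R _ predT (fun u => (M - d^-1 *: D) u.1 u.2) Z (i, t) isT.
  by rewrite /= subscaleE => /eqP; rewrite subr_eq0 scaleE => /eqP.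
move=> ->; split; first by rewrite frobMs.
by move=> M' h; rewrite objMs; exact: ub.
Qed.

End Main.

Theorem mainTheorem5 (R : rcfType) (p G n : nat) (grp : 'I_p -> 'I_G)
  (grp_nonempty : forall g : 'I_G, exists j : 'I_p, grp j = g)
  (T : 'M[R]_(p, n.-1)) (lam : R) (lam_pos : 0 < lam)
  (hT : T != Rstar grp T lam) :
  forall M : 'M[R]_(p, n.-1),
    is_argmax grp T lam M <->
    M = (frob (T - Rstar grp T lam))^-1 *: (T - Rstar grp T lam).
Proof. move=> M; exact: (@main_sec R p G n.-1 grp T lam lam_pos hT M). Qed.
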